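(* Let $n\in\{2,6,10,\dots\}$ and let $p_n$ denote the minimum length of an increasing path of $f_n$ from the origin to a local maximum of $f_n$. Then $p_2=2$ and $p_{n+4}\ge 2p_n$ for all $n\in\{2,6,10,\dots\}$.
   Context: For $n\in\{2,6,10,\dots\}$ define polynomials $f_n$ in variables $x_1,\dots,x_n$ (evaluated on $\{0,1\}^n$) recursively. Set $f_2(x_1,x_2):=x_1+x_2$. For $n\in\{2,6,10,\dots\}$, write $\mathbf{x}=(x_1,\dots,x_n)$, $S:=\sum_{i=1}^n x_i$, let $M_n:=\max_{\{0,1\}^n} f_n-\min_{\{0,1\}^n} f_n+1$, and define $f_{n+4}(\mathbf{x},x_{n+1},x_{n+2},x_{n+3},x_{n+4}) := f_n(\mathbf{x}) - M_n n^2 x_{n+1} + M_n(n+1) S x_{n+1} - x_{n+2} - 2M_n n S x_{n+2} + 2M_n n(n+2) x_{n+1}x_{n+2} - 4 S x_{n+3} + 2x_{n+1}x_{n+3} + 2x_{n+2}x_{n+3} - 3x_{n+3} + (M_n(n-1)+4) S x_{n+4} + 6M_n n^2 x_{n+3}x_{n+4} - 5M_n n^2 x_{n+4}$. For a function $f:\{0,1\}^m\to\mathbb{R}$, an increasing path is a sequence of vertices $v_0,\dots,v_k$ of $\{0,1\}^m$ such that consecutive vertices differ in exactly one coordinate and $f(v_{j+1})>f(v_j)$ for all $j$; its length is $k$. A local maximum is a vertex no neighbor of which has strictly larger value. *)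

(* Defs.v *)
From mathcomp Require Import all_boot all_order all_algebra.
Set Implicit Arguments. Unset Strict Implicit. Unset Printing Implicit Defensive.
Import Order.TTheory GRing.Theory Num.Theory.
Local Open Scope ring_scope.

(* index k encodes n = 4k+2 *)
Definition dim (k : nat) : nat := (4 * k + 2)%N.

(* a 0/1 vector of length m, as coordinates x_1..x_m stored at indices 0..m-1,
   extended by 0 beyond m *)
Definition vec (m : nat) (t : m.-tuple bool) : nat -> int :=
  fun i => ((nth false t i : nat))%:Z.

Definition spread (m : nat) (g : (nat -> int) -> int) : int :=
  (\big[Num.max/ g (fun _ => 0)]_(t : m.-tuple bool) g (vec t))
  - (\big[Num.min/ g (fun _ => 0)]_(t : m.-tuple bool) g (vec t)) + 1.

(* f k = f_{4k+2}; variable x_{i+1} is x i (0-indexed) *)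
Fixpoint f (k : nat) : (nat -> int) -> int :=
  match k with
  | 0%N => fun x => x 0%N + x 1%N
  | k'.+1 => fun x =>
    let n := dim k' in
    let M := spread n (f k') in
    let S := \sum_(i < n) x i in
    let N : int := n%:Z in
    let y1 := x n in let y2 := x n.+1 in let y3 := x n.+2 in let y4 := x n.+3 in
    f k' x - M * N ^+ 2 * y1 + M * (N + 1) * S * y1 - y2
    - 2 * M * N * S * y2 + 2 * M * N * (N + 2) * y1 * y2
    - 4 * S * y3 + 2 * y1 * y3 + 2 * y2 * y3 - 3 * y3
    + (M * (N - 1) + 4) * S * y4 + 6 * M * N ^+ 2 * y3 * y4
    - 5 * M * N ^+ 2 * y4
  end.

Definition F (k : nat) (t : (dim k).-tuple bool) : int := f k (vec t).

Definition adj (m : nat) (t u : m.-tuple bool) : bool :=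
  (\sum_(i < m) (tnth t i != tnth u i) == 1)%N.

Definition origin (k : nat) : (dim k).-tuple bool := nseq_tuple (dim k) false.

Definition local_max (k : nat) (v : (dim k).-tuple bool) : bool :=
  [forall w, adj v w ==> ~~ (F v < F w)].

(* v0 :: vs is an increasing path of f_n (length = size vs) *)
Definition increasing_path (k : nat) (v0 : (dim k).-tuple bool)
    (vs : seq ((dim k).-tuple bool)) : bool :=
  path (fun v w => adj v w && (F v < F w)) v0 vs.

Definition is_p (k : nat) (L : nat) : Prop :=
  (exists vs, [/\ increasing_path (origin k) vs,
                  local_max (last (origin k) vs) & size vs = L])
  /\ (forall vs, increasing_path (origin k) vs ->
                 local_max (last (origin k) vs) -> (L <= size vs)%N).

(* Main.v *)
Require Import Defs.
From mathcomp Require Import all_boot all_order all_algebra.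
From mathcomp Require Import zify ring lra.
From Stdlib Require Import Classical_Prop.
Import Defs.
Import Order.TTheory GRing.Theory Num.Theory.
Set Implicit Arguments. Unset Strict Implicit. Unset Printing Implicit Defensive.
Local Open Scope ring_scope.

Definition ones k : (dim k).-tuple bool := nseq_tuple (dim k) true.

Definition flip m (t : m.-tuple bool) (j : 'I_m) : m.-tuple bool :=
  [tuple if i == j then ~~ tnth t i else tnth t i | i < m].

Lemma tnth_flip m (t : m.-tuple bool) j i :
  tnth (flip t j) i = if i == j then ~~ tnth t i else tnth t i.
Proof. by rewrite tnth_mktuple. Qed.

Lemma nth_flip m (t : m.-tuple bool) (j : 'I_m) i :
  nth false (flip t j) i = if i == j :> nat then ~~ nth false t i else nth false t i.
Proof.
case: (ltnP i m) => hi.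
  have := tnth_flip t j (Ordinal hi).
  by rewrite !(tnth_nth false) /=.
rewrite !nth_default ?size_tuple //.
by case: eqP => // e; move: (ltn_ord j); rewrite -e ltnNge hi.
Qed.

Lemma adj_flip m (t : m.-tuple bool) j : adj t (flip t j).
Proof.
rewrite /adj (bigD1 j) //= big1 ?tnth_flip ?eqxx ?addn0; first by case: (tnth t j).
by move=> i /negbTE hij; rewrite tnth_flip hij eqxx.
Qed.

Lemma adjP m (t u : m.-tuple bool) : adj t u -> exists j, u = flip t j.
Proof.
move=> h.
pose A := [set i | tnth t i != tnth u i].
have cA : #|A| = 1%N.
  rewrite -sum1_card big_mkcond /=; apply/eqP; rewrite -[X in X == _]/(_ : nat).
  move: h; rewrite /adj; congr (_ == _); apply: eq_bigr => i _; rewrite inE.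
  by case: (_ != _).
case/cards1P: (introT eqP cA) => j hA.
exists j; apply: eq_from_tnth => i; rewrite tnth_flip.
have : (i \in A) = (i \in [set j]) by rewrite hA.
rewrite !inE.
case: (i == j) => /=;
  by case: (tnth t i); case: (tnth u i).
Qed.

Definition Mk k : int := spread (dim k) (f k).
Definition Nk k : int := (dim k)%:Z.

Definition PhiG (M N S y1 y2 y3 y4 : int) : int :=
  - M * N ^+ 2 * y1 + M * (N + 1) * S * y1 - y2
    - 2 * M * N * S * y2 + 2 * M * N * (N + 2) * y1 * y2
    - 4 * S * y3 + 2 * y1 * y3 + 2 * y2 * y3 - 3 * y3
    + (M * (N - 1) + 4) * S * y4 + 6 * M * N ^+ 2 * y3 * y4
    - 5 * M * N ^+ 2 * y4.

Lemma f_succ k x : f k.+1 x = f k x +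
   PhiG (Mk k) (Nk k) (\sum_(i < dim k) x i) (x (dim k)) (x (dim k).+1)
        (x (dim k).+2) (x (dim k).+3).
Proof. rewrite /= /PhiG /Mk /Nk; ring. Qed.

Lemma dimS k : dim k.+1 = (dim k + 4)%N.
Proof. rewrite /dim; lia. Qed.

Lemma f_ext k x x' : (forall i, (i < dim k)%N -> x i = x' i) -> f k x = f k x'.
Proof.
elim: k x x' => [|k IH] x x' h.
  by rewrite /= !h.
have h' : forall i, (i < dim k)%N -> x i = x' i.
  by move=> i hi; apply: h; rewrite dimS; lia.
rewrite !f_succ (IH x x' h').
rewrite (eq_bigr (fun i : 'I_(dim k) => x' i)); last by move=> i _; apply: h'.
by rewrite !h // dimS; lia.
Qed.

Definition xpart k (t : (dim k.+1).-tuple bool) : (dim k).-tuple bool :=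
  [tuple nth false t i | i < dim k].

Lemma nth_xpart k (t : (dim k.+1).-tuple bool) i : (i < dim k)%N ->
  nth false (xpart t) i = nth false t i.
Proof.
move=> hi; have := tnth_mktuple (fun i : 'I_(dim k) => nth false t i) (Ordinal hi).
by rewrite (tnth_nth false).
Qed.

Definition yb k (t : (dim k.+1).-tuple bool) m : bool := nth false t (dim k + m).
Definition Y k (t : (dim k.+1).-tuple bool) m : int := (yb t m : nat)%:Z.

Definition Sg m (x : m.-tuple bool) : int := \sum_(i < m) (tnth x i : nat)%:Z.

Lemma F_succ k (t : (dim k.+1).-tuple bool) :
  F t = F (xpart t) + PhiG (Mk k) (Nk k) (Sg (xpart t)) (Y t 0) (Y t 1) (Y t 2) (Y t 3).
Proof.
rewrite /F f_succ (@f_ext k (vec t) (vec (xpart t))); last first.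
  by move=> i hi; rewrite /vec nth_xpart.
have eS : \sum_(i < dim k) vec t i = Sg (xpart t).
  by apply: eq_bigr => i _; rewrite /vec (tnth_nth false) nth_xpart.
have e0 : vec t (dim k) = Y t 0 by rewrite /Y /yb addn0.
have e1 : vec t (dim k).+1 = Y t 1 by rewrite /Y /yb addn1.
have e2 : vec t (dim k).+2 = Y t 2 by rewrite /Y /yb addn2.
have e3 : vec t (dim k).+3 = Y t 3 by rewrite /Y /yb addn3.
by rewrite eS e0 e1 e2 e3.
Qed.

Lemma spread_bound k (a b : (dim k).-tuple bool) : F a - F b < Mk k.
Proof.
rewrite /Mk /spread /F.
have h1 : f k (vec a) <= \big[Num.max/f k (fun=> 0)]_(t : (dim k).-tuple bool) f k (vec t).
  exact: (le_bigmax (f k (fun=> 0)) (fun t : (dim k).-tuple bool => f k (vec t)) a).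
have h2 : \big[Num.min/f k (fun=> 0)]_(t : (dim k).-tuple bool) f k (vec t) <= f k (vec b).
  exact: (bigmin_le (f k (fun=> 0)) b (fun t : (dim k).-tuple bool => f k (vec t))).
lia.
Qed.

Lemma Mk_ge1 k : 1 <= Mk k.
Proof. have := spread_bound (origin k) (origin k); lia. Qed.

Lemma Nk_ge2 k : 2 <= Nk k.
Proof. rewrite /Nk /dim; lia. Qed.

Lemma Sg_bounds m (x : m.-tuple bool) : 0 <= Sg x <= (m%:Z).
Proof.
apply/andP; split; first by apply: sumr_ge0 => i _; case: (tnth x i).
rewrite /Sg; apply: le_trans (_ : \sum_(i < m) (1:int) <= _).
  by apply: ler_sum => i _; case: (tnth x i).
by rewrite sumr_const card_ord -natz.
Qed.

Lemma Sg_flip m (x : m.-tuple bool) j :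
  Sg (flip x j) = Sg x + (if tnth x j then -1 else 1).
Proof.
rewrite /Sg (bigD1 j) //= [in RHS](bigD1 j) //= tnth_flip eqxx.
rewrite (eq_bigr (fun i => (tnth x i : nat)%:Z)); last first.
  by move=> i /negbTE h; rewrite tnth_flip h.
by case: (tnth x j) => /=; ring.
Qed.

Lemma Sg_ones m : Sg (nseq_tuple m true) = m%:Z.
Proof.
rewrite /Sg (eq_bigr (fun _ => 1)); last by move=> i _; rewrite tnth_nseq.
by rewrite sumr_const card_ord -natz.
Qed.

Lemma Sg_N m (x : m.-tuple bool) : Sg x = m%:Z -> x = nseq_tuple m true.
Proof.
move=> h.
have h0 : \sum_(i < m) (1 - (tnth x i : nat)%:Z) = 0.
  rewrite sumrB sumr_const card_ord natz; rewrite /Sg in h; rewrite h; exact: subrr.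
apply: eq_from_tnth => i; rewrite tnth_nseq.
have : 1 - (tnth x i : nat)%:Z = 0.
  by apply: (psumr_eq0P _ h0) => // j _; case: (tnth x j).
by case: (tnth x i).
Qed.

Lemma Sg_0 m (x : m.-tuple bool) : Sg x = 0 -> x = nseq_tuple m false.
Proof.
move=> h; apply: eq_from_tnth => i; rewrite tnth_nseq.
have : (tnth x i : nat)%:Z = 0.
  by apply: (psumr_eq0P _ h) => // j _; case: (tnth x j).
by case: (tnth x i).
Qed.

Lemma Sg_pos m (x : m.-tuple bool) : 0 < Sg x -> exists j, tnth x j.
Proof.
case: (boolP [exists j, tnth x j]) => [/existsP //|].
rewrite negb_exists => /forallP h.
rewrite /Sg big1 ?ltxx // => i _; by move: (h i); case: (tnth x i).
Qed.

Lemma xpart_flip_lo k (t : (dim k.+1).-tuple bool) (j : 'I_(dim k.+1)) (h : (j < dim k)%N) :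
  xpart (flip t j) = flip (xpart t) (Ordinal h).
Proof.
apply: eq_from_tnth => i; rewrite tnth_flip !(tnth_nth false) !nth_xpart //.
by rewrite nth_flip.
Qed.

Lemma xpart_flip_hi k (t : (dim k.+1).-tuple bool) (j : 'I_(dim k.+1)) :
  (dim k <= j)%N -> xpart (flip t j) = xpart t.
Proof.
move=> h; apply: eq_from_tnth => i; rewrite !(tnth_nth false) !nth_xpart //.
rewrite nth_flip; case: eqP => // e.
by move: (ltn_ord i); rewrite e ltnNge h.
Qed.

Lemma yb_flip k (t : (dim k.+1).-tuple bool) (j : 'I_(dim k.+1)) m :
  yb (flip t j) m = if (dim k + m == j)%N then ~~ yb t m else yb t m.
Proof. by rewrite /yb nth_flip. Qed.

Lemma dim_le k : (dim k <= dim k.+1)%N.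
Proof. by rewrite dimS leq_addr. Qed.

Definition widen k (j : 'I_(dim k)) : 'I_(dim k.+1) := widen_ord (dim_le k) j.

Lemma xpart_widen k (t : (dim k.+1).-tuple bool) (j : 'I_(dim k)) :
  xpart (flip t (widen j)) = flip (xpart t) j.
Proof.
rewrite (xpart_flip_lo _ (ltn_ord j : (widen j < dim k)%N)); congr flip.
by apply: val_inj.
Qed.

Lemma yb_widen k (t : (dim k.+1).-tuple bool) (j : 'I_(dim k)) m :
  yb (flip t (widen j)) m = yb t m.
Proof.
rewrite yb_flip; case: eqP => // e.
by move: (ltn_ord j) e => /= hj e; move: hj; rewrite -e ltnNge leq_addr.
Qed.

Lemma yidx_lt k m : (m < 4)%N -> (dim k + m < dim k.+1)%N.
Proof. by rewrite dimS ltn_add2l. Qed.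

Definition yidx k m (h : (m < 4)%N) : 'I_(dim k.+1) := Ordinal (yidx_lt k h).

Lemma xpart_yidx k (t : (dim k.+1).-tuple bool) m (h : (m < 4)%N) :
  xpart (flip t (yidx k h)) = xpart t.
Proof. by rewrite xpart_flip_hi //= leq_addr. Qed.

Lemma yb_yidx k (t : (dim k.+1).-tuple bool) m (h : (m < 4)%N) m' :
  yb (flip t (yidx k h)) m' = if m' == m then ~~ yb t m' else yb t m'.
Proof. by rewrite yb_flip /= eqn_add2l. Qed.

Lemma xpart_origin k : xpart (origin k.+1) = origin k.
Proof.
apply: eq_from_tnth => i; rewrite !(tnth_nth false) nth_xpart //.
by rewrite /origin !nth_nseq !if_same.
Qed.

Lemma yb_origin k m : yb (origin k.+1) m = false.
Proof. by rewrite /yb /origin nth_nseq if_same. Qed.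

Lemma ones_succ k (t : (dim k.+1).-tuple bool) :
  xpart t = ones k -> [/\ yb t 0, yb t 1, yb t 2 & yb t 3] -> t = ones k.+1.
Proof.
move=> hx [h0 h1 h2 h3]; apply: eq_from_tnth => i.
rewrite /ones tnth_nseq (tnth_nth false).
case: (ltnP i (dim k)) => hi.
  by rewrite -nth_xpart // hx nth_nseq hi.
have : (i < dim k + 4)%N by rewrite -dimS.
move: h0 h1 h2 h3; rewrite /yb.
have -> : nat_of_ord i = (dim k + (i - dim k))%N by rewrite subnKC.
rewrite ltn_add2l.
by case: (i - dim k)%N => [|[|[|[|]]]].
Qed.

Section Arith.
Variables M N S : int.
Hypotheses (HM : 1 <= M) (HN : 2 <= N) (HS0 : 0 <= S) (HSN : S <= N).
Local Notation P := (PhiG M N).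

Lemma ar_A_y1 : P S 0 0 0 0 < P S 1 0 0 0 -> S = N.
Proof. rewrite /PhiG => h; nia. Qed.
Lemma ar_A_y1' : S = N -> P S 0 0 0 0 < P S 1 0 0 0.
Proof. rewrite /PhiG => h; nia. Qed.
Lemma ar_A_y2 : P S 0 1 0 0 < P S 0 0 0 0.
Proof. rewrite /PhiG; nia. Qed.
Lemma ar_A_y3 : P S 0 0 1 0 < P S 0 0 0 0.
Proof. rewrite /PhiG; nia. Qed.
Lemma ar_A_y4 : P S 0 0 0 1 < P S 0 0 0 0.
Proof. rewrite /PhiG; nia. Qed.
Lemma ar_A_x S' : P S' 0 0 0 0 = P S 0 0 0 0.
Proof. rewrite /PhiG; ring. Qed.

Lemma ar_A'_x S' d : d < M -> S = N -> (S' = S + 1 \/ S' = S - 1) -> S' <= N ->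
  d + P S' 1 0 0 0 - P S 1 0 0 0 < 0.
Proof. rewrite /PhiG => h1 h2 h3 h4; have -> : S' = N - 1 by lia. subst S; nia. Qed.
Lemma ar_A'_y1 : S = N -> P S 0 0 0 0 < P S 1 0 0 0.
Proof. rewrite /PhiG => h; nia. Qed.
Lemma ar_A'_y2 : S = N -> P S 1 0 0 0 < P S 1 1 0 0.
Proof. rewrite /PhiG => h; nia. Qed.
Lemma ar_A'_y3 : S = N -> P S 1 0 1 0 < P S 1 0 0 0.
Proof. rewrite /PhiG => h; nia. Qed.
Lemma ar_A'_y4 : S = N -> P S 1 0 0 1 < P S 1 0 0 0.
Proof. rewrite /PhiG => h; nia. Qed.

Lemma ar_B_y1 : P S 0 1 0 0 < P S 1 1 0 0.
Proof. rewrite /PhiG; nia. Qed.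
Lemma ar_B_y2 : P S 1 0 0 0 < P S 1 1 0 0.
Proof. rewrite /PhiG; nia. Qed.
Lemma ar_B_y3 : P S 1 1 0 0 < P S 1 1 1 0 -> S = 0.
Proof. rewrite /PhiG => h; nia. Qed.
Lemma ar_B_y3' : S = 0 -> P S 1 1 0 0 < P S 1 1 1 0.
Proof. rewrite /PhiG => h; nia. Qed.
Lemma ar_B_y4 : P S 1 1 0 1 < P S 1 1 0 0.
Proof. rewrite /PhiG; nia. Qed.
Lemma ar_B_x d : - M < d -> 0 < d + P (S - 1) 1 1 0 0 - P S 1 1 0 0.
Proof. rewrite /PhiG => h; nia. Qed.

Lemma ar_B'_x S' d : d < M -> S = 0 -> (S' = S + 1 \/ S' = S - 1) -> 0 <= S' ->
  d + P S' 1 1 1 0 - P S 1 1 1 0 < 0.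
Proof. rewrite /PhiG => h1 h2 h3 h4; have -> : S' = 1 by lia. subst S; nia. Qed.
Lemma ar_B'_y1 : S = 0 -> P S 0 1 1 0 < P S 1 1 1 0.
Proof. rewrite /PhiG => h; nia. Qed.
Lemma ar_B'_y2 : S = 0 -> P S 1 0 1 0 < P S 1 1 1 0.
Proof. rewrite /PhiG => h; nia. Qed.
Lemma ar_B'_y3 : S = 0 -> P S 1 1 0 0 < P S 1 1 1 0.
Proof. rewrite /PhiG => h; nia. Qed.
Lemma ar_B'_y4 : S = 0 -> P S 1 1 1 0 < P S 1 1 1 1.
Proof. rewrite /PhiG => h; nia. Qed.

Lemma ar_C_x S' : P S' 1 1 1 1 = P S 1 1 1 1.
Proof. rewrite /PhiG; ring. Qed.
Lemma ar_C_y1 : P S 0 1 1 1 < P S 1 1 1 1.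
Proof. rewrite /PhiG; nia. Qed.
Lemma ar_C_y2 : P S 1 0 1 1 < P S 1 1 1 1.
Proof. rewrite /PhiG; nia. Qed.
Lemma ar_C_y3 : P S 1 1 0 1 < P S 1 1 1 1.
Proof. rewrite /PhiG; nia. Qed.
Lemma ar_C_y4 : P S 1 1 1 0 < P S 1 1 1 1.
Proof. rewrite /PhiG; nia. Qed.
End Arith.

Lemma Z0 : Posz 0 = 0. Proof. by []. Qed.
Lemma Z1 : Posz 1 = 1. Proof. by []. Qed.

Definition cfg k (t : (dim k.+1).-tuple bool) a b c d :=
  [/\ yb t 0 = a, yb t 1 = b, yb t 2 = c & yb t 3 = d].

Lemma cfg_widen k (t : (dim k.+1).-tuple bool) j a b c d :
  cfg t a b c d -> cfg (flip t (widen j)) a b c d.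
Proof. by rewrite /cfg !yb_widen. Qed.

Lemma moveP k (t u : (dim k.+1).-tuple bool) : adj t u ->
  (exists j, u = flip t (widen j)) \/ (exists m (h : (m < 4)%N), u = flip t (yidx k h)).
Proof.
case/adjP => j ->.
case: (ltnP j (dim k)) => hj.
  by left; exists (Ordinal hj); congr flip; apply: val_inj.
right; have hm : (j - dim k < 4)%N.
  by rewrite ltn_subLR // -dimS.
exists (j - dim k)%N, hm; congr flip; apply: val_inj => /=.
by rewrite subnKC.
Qed.


Lemma not_lm k (t u : (dim k).-tuple bool) : adj t u -> F t < F u -> ~~ local_max t.
Proof. by move=> h1 h2; apply/negP => /forallP /(_ u); rewrite h1 h2. Qed.

Lemma SgN k (x : (dim k).-tuple bool) : 0 <= Sg x /\ Sg x <= Nk k.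
Proof. by have /andP[] := Sg_bounds x. Qed.

Lemma Sg_flip2 m (x : m.-tuple bool) j : Sg (flip x j) = Sg x + 1 \/ Sg (flip x j) = Sg x - 1.
Proof. by rewrite Sg_flip; case: (tnth x j); [right|left]. Qed.

Ltac prep k t :=
  have HM := Mk_ge1 k; have HN := Nk_ge2 k; have [HS0 HSN] := SgN (xpart t).

Ltac ysimp hc :=
  rewrite ?F_succ ?xpart_yidx ?xpart_widen /Y ?yb_yidx ?yb_widen /=;
  case: hc => -> -> -> -> /=; rewrite ?Z0 ?Z1.

Section Steps.
Variable k : nat.
Local Notation M := (Mk k).
Local Notation N := (Nk k).
Implicit Types t u : (dim k.+1).-tuple bool.

Lemma stepA t u : cfg t false false false false -> adj t u -> F t < F u ->
  (exists j, u = flip t (widen j) /\ F (xpart t) < F (flip (xpart t) j))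
  \/ (u = flip t (yidx k (isT : (0 < 4)%N)) /\ Sg (xpart t) = N).
Proof.
prep k t.
move=> hc /moveP [[j ->]|[m [h ->]]]; ysimp hc.
  move=> hF; left; exists j; split => //.
  by rewrite (ar_A_x _ _ (Sg (xpart t))) ltrD2r in hF.
case: m h => [|[|[|[|m]]]] h //=; rewrite ltrD2l => hF.
- right; split; first by congr flip; apply: val_inj.
  exact: (ar_A_y1 HM HN HS0 HSN hF).
- by move: (lt_trans hF (ar_A_y2 HM HN HS0 HSN)); rewrite ltxx.
- by move: (lt_trans hF (ar_A_y3 HM HN HS0 HSN)); rewrite ltxx.
- by move: (lt_trans hF (ar_A_y4 HM HN HS0 HSN)); rewrite ltxx.
Qed.


Lemma not_lmP k' (x : (dim k').-tuple bool) : ~~ local_max x ->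
  exists j, F x < F (flip x j).
Proof.
move/forallPn => [w]; rewrite negb_imply negbK => /andP[/adjP[j ->] h].
by exists j.
Qed.

Lemma nlmA t : cfg t false false false false ->
  (~~ local_max (xpart t) \/ Sg (xpart t) = N) -> ~~ local_max t.
Proof.
prep k t => hc [/not_lmP [j hj]| hS].
  apply: (not_lm (adj_flip t (widen j))); ysimp hc.
  by rewrite (ar_A_x _ _ (Sg (xpart t))) ltrD2r.
apply: (not_lm (adj_flip t (yidx k (isT : (0 < 4)%N)))); ysimp hc.
by rewrite ltrD2l; apply: (ar_A_y1' HM HN HS0 HSN hS).
Qed.

Lemma stepA' t u : cfg t true false false false -> Sg (xpart t) = N -> adj t u -> F t < F u ->
  u = flip t (yidx k (isT : (1 < 4)%N)).
Proof.
prep k t.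
move=> hc hS /moveP [[j ->]|[m [h ->]]]; ysimp hc.
  move=> hF; have hd := spread_bound (flip (xpart t) j) (xpart t).
  have [hS0' hSN'] := SgN (flip (xpart t) j).
  have := ar_A'_x HM HN HS0 HSN hd hS (Sg_flip2 (xpart t) j) hSN'.
  lia.
case: m h => [|[|[|[|m]]]] h //=; rewrite ltrD2l => hF.
- by move: (lt_trans hF (ar_A'_y1 HM HN HS0 HSN hS)); rewrite ltxx.
- by move: (lt_trans hF (ar_A'_y3 HM HN HS0 HSN hS)); rewrite ltxx.
- by move: (lt_trans hF (ar_A'_y4 HM HN HS0 HSN hS)); rewrite ltxx.
Qed.

Lemma nlmA' t : cfg t true false false false -> Sg (xpart t) = N -> ~~ local_max t.
Proof.
prep k t => hc hS.
apply: (not_lm (adj_flip t (yidx k (isT : (1 < 4)%N)))); ysimp hc.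
by rewrite ltrD2l; apply: (ar_A'_y2 HM HN HS0 HSN hS).
Qed.

Lemma stepB t u : cfg t true true false false -> adj t u -> F t < F u ->
  (exists j, u = flip t (widen j))
  \/ (u = flip t (yidx k (isT : (2 < 4)%N)) /\ Sg (xpart t) = 0).
Proof.
prep k t.
move=> hc /moveP [[j ->]|[m [h ->]]]; first by move=> _; left; exists j.
ysimp hc.
case: m h => [|[|[|[|m]]]] h //=; rewrite ltrD2l => hF.
- by move: (lt_trans hF (ar_B_y1 HM HN HS0 HSN)); rewrite ltxx.
- by move: (lt_trans hF (ar_B_y2 HM HN HS0 HSN)); rewrite ltxx.
- right; split; first by congr flip; apply: val_inj.
  exact: (ar_B_y3 HM HN HS0 HSN hF).
- by move: (lt_trans hF (ar_B_y4 HM HN HS0 HSN)); rewrite ltxx.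
Qed.

Lemma nlmB t : cfg t true true false false -> ~~ local_max t.
Proof.
prep k t => hc.
have [hS|hS] := eqVneq (Sg (xpart t)) 0.
  apply: (not_lm (adj_flip t (yidx k (isT : (2 < 4)%N)))); ysimp hc.
  by rewrite ltrD2l; apply: (ar_B_y3' HM HN HS0 HSN hS).
have [j hj] : exists j, tnth (xpart t) j by apply: Sg_pos; rewrite lt_def hS HS0.
apply: (not_lm (adj_flip t (widen j))); ysimp hc.
have hd := spread_bound (xpart t) (flip (xpart t) j).
have := ar_B_x HM HN HS0 HSN (_ : - M < F (flip (xpart t) j) - F (xpart t)).
rewrite Sg_flip hj; lia.
Qed.

Lemma stepB' t u : cfg t true true true false -> Sg (xpart t) = 0 -> adj t u -> F t < F u ->
  u = flip t (yidx k (isT : (3 < 4)%N)).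
Proof.
prep k t.
move=> hc hS /moveP [[j ->]|[m [h ->]]]; ysimp hc.
  move=> hF; have hd := spread_bound (flip (xpart t) j) (xpart t).
  have [hS0' hSN'] := SgN (flip (xpart t) j).
  have := ar_B'_x HM HN HS0 HSN hd hS (Sg_flip2 (xpart t) j) hS0'.
  lia.
case: m h => [|[|[|[|m]]]] h //=; rewrite ltrD2l => hF.
- by move: (lt_trans hF (ar_B'_y1 HM HN HS0 HSN hS)); rewrite ltxx.
- by move: (lt_trans hF (ar_B'_y2 HM HN HS0 HSN hS)); rewrite ltxx.
- by move: (lt_trans hF (ar_B'_y3 HM HN HS0 HSN hS)); rewrite ltxx.
Qed.

Lemma nlmB' t : cfg t true true true false -> Sg (xpart t) = 0 -> ~~ local_max t.
Proof.
prep k t => hc hS.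
apply: (not_lm (adj_flip t (yidx k (isT : (3 < 4)%N)))); ysimp hc.
by rewrite ltrD2l; apply: (ar_B'_y4 HM HN HS0 HSN hS).
Qed.

Lemma stepC t u : cfg t true true true true -> adj t u -> F t < F u ->
  exists j, u = flip t (widen j) /\ F (xpart t) < F (flip (xpart t) j).
Proof.
prep k t.
move=> hc /moveP [[j ->]|[m [h ->]]]; ysimp hc.
  move=> hF; exists j; split => //.
  by rewrite (ar_C_x _ _ (Sg (xpart t))) ltrD2r in hF.
case: m h => [|[|[|[|m]]]] h //=; rewrite ltrD2l => hF.
- by move: (lt_trans hF (ar_C_y1 HM HN HS0 HSN)); rewrite ltxx.
- by move: (lt_trans hF (ar_C_y2 HM HN HS0 HSN)); rewrite ltxx.
- by move: (lt_trans hF (ar_C_y3 HM HN HS0 HSN)); rewrite ltxx.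
- by move: (lt_trans hF (ar_C_y4 HM HN HS0 HSN)); rewrite ltxx.
Qed.

Lemma lmC t : cfg t true true true true -> local_max t = local_max (xpart t).
Proof.
move=> hc; apply/idP/idP.
  apply: contraLR => /not_lmP [j hj]; apply: (not_lm (adj_flip t (widen j))).
  prep k t; ysimp hc.
  by rewrite (ar_C_x _ _ (Sg (xpart t))) ltrD2r.
move=> hl; apply/forallP => u; apply/implyP => ha; apply/negP => hF.
have [j [eu hj]] := stepC hc ha hF.
by move/forallP: hl => /(_ (flip (xpart t) j)); rewrite adj_flip hj.
Qed.
End Steps.

Definition Inv k := local_max (ones k) /\
  forall vs, increasing_path (origin k) vs -> local_max (last (origin k) vs) ->
    last (origin k) vs = ones k.

Lemma incpath_cons k (v u : (dim k).-tuple bool) vs :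
  increasing_path v (u :: vs) = [&& adj v u, F v < F u & increasing_path u vs].
Proof. by rewrite /increasing_path /= andbA. Qed.

Lemma cfg_yidx0 k (t : (dim k.+1).-tuple bool) :
  cfg t false false false false -> cfg (flip t (yidx k (isT : (0 < 4)%N))) true false false false.
Proof. by case=> h0 h1 h2 h3; split; rewrite yb_yidx /= ?h0 ?h1 ?h2 ?h3. Qed.
Lemma cfg_yidx1 k (t : (dim k.+1).-tuple bool) :
  cfg t true false false false -> cfg (flip t (yidx k (isT : (1 < 4)%N))) true true false false.
Proof. by case=> h0 h1 h2 h3; split; rewrite yb_yidx /= ?h0 ?h1 ?h2 ?h3. Qed.
Lemma cfg_yidx2 k (t : (dim k.+1).-tuple bool) :
  cfg t true true false false -> cfg (flip t (yidx k (isT : (2 < 4)%N))) true true true false.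
Proof. by case=> h0 h1 h2 h3; split; rewrite yb_yidx /= ?h0 ?h1 ?h2 ?h3. Qed.
Lemma cfg_yidx3 k (t : (dim k.+1).-tuple bool) :
  cfg t true true true false -> cfg (flip t (yidx k (isT : (3 < 4)%N))) true true true true.
Proof. by case=> h0 h1 h2 h3; split; rewrite yb_yidx /= ?h0 ?h1 ?h2 ?h3. Qed.

Section Paths.
Variables (k a : nat).
Hypotheses (Ha : is_p k a) (HI : Inv k).
Implicit Types t u : (dim k.+1).-tuple bool.

Lemma pathC vs t : cfg t true true true true -> increasing_path t vs -> local_max (last t vs) ->
  exists ws, [/\ increasing_path (xpart t) ws, size ws = size vs,
     last (xpart t) ws = xpart (last t vs), cfg (last t vs) true true true true
     & local_max (xpart (last t vs))].
Proof.
elim: vs t => [|u vs IH] t hc.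
  by move=> _ hl; exists [::]; split => //; rewrite -(lmC hc).
rewrite incpath_cons => /and3P[ha hF hp] /= hl.
have [j [eu hj]] := stepC hc ha hF.
have hcu : cfg u true true true true by rewrite eu; apply: cfg_widen.
have [ws [h1 h2 h3 h4 h5]] := IH u hcu hp hl.
exists (xpart u :: ws); split => //; last by rewrite /= h2.
by rewrite incpath_cons h1 eu xpart_widen adj_flip hj.
Qed.

Lemma pathB' vs t : cfg t true true true false -> Sg (xpart t) = 0 ->
  increasing_path t vs -> local_max (last t vs) ->
  (a <= size vs)%N /\ last t vs = ones k.+1.
Proof.
case: vs => [|u vs] hc hS.
  by move=> _ /= hl; move: (nlmB' hc hS); rewrite hl.
rewrite incpath_cons => /and3P[ha hF hp] /= hl.
have eu := stepB' hc hS ha hF.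
have hcu : cfg u true true true true by rewrite eu; apply: cfg_yidx3.
have hxu : xpart u = origin k by rewrite eu xpart_yidx; apply: Sg_0.
have [ws [h1 h2 h3 h4 h5]] := pathC hcu hp hl.
rewrite hxu in h1 h3.
have hla : (a <= size ws)%N.
  by case: Ha => _; apply => //; rewrite h3.
split; first by rewrite -h2 (leq_trans hla).
apply: ones_succ; first by rewrite -h3; apply: HI.2 => //; rewrite h3.
by case: h4 => -> -> -> ->.
Qed.

Lemma pathB vs t : cfg t true true false false ->
  increasing_path t vs -> local_max (last t vs) ->
  (a <= size vs)%N /\ last t vs = ones k.+1.
Proof.
elim: vs t => [|u vs IH] t hc.
  by move=> _ /= hl; move: (nlmB hc); rewrite hl.
rewrite incpath_cons => /and3P[ha hF hp] /= hl.
case: (stepB hc ha hF) => [[j eu]|[eu hS]].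
  have hcu : cfg u true true false false by rewrite eu; apply: cfg_widen.
  by have [h1 h2] := IH u hcu hp hl; split => //; apply: leqW.
have hcu : cfg u true true true false by rewrite eu; apply: cfg_yidx2.
have hSu : Sg (xpart u) = 0 by rewrite eu xpart_yidx.
by have [h1 h2] := pathB' hcu hSu hp hl; split => //; apply: leqW.
Qed.

Lemma pathA' vs t : cfg t true false false false -> Sg (xpart t) = Nk k ->
  increasing_path t vs -> local_max (last t vs) ->
  (a <= size vs)%N /\ last t vs = ones k.+1.
Proof.
case: vs => [|u vs] hc hS.
  by move=> _ /= hl; move: (nlmA' hc hS); rewrite hl.
rewrite incpath_cons => /and3P[ha hF hp] /= hl.
have eu := stepA' hc hS ha hF.
have hcu : cfg u true true false false by rewrite eu; apply: cfg_yidx1.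
by have [h1 h2] := pathB hcu hp hl; split => //; apply: leqW.
Qed.

Lemma pathA vs t ps : cfg t false false false false ->
  increasing_path (origin k) ps -> last (origin k) ps = xpart t ->
  increasing_path t vs -> local_max (last t vs) ->
  exists ws, [/\ increasing_path (xpart t) ws, last (xpart t) ws = ones k,
     (size ws + a <= size vs)%N & last t vs = ones k.+1].
Proof.
elim: vs t ps => [|u vs IH] t ps hc hps hlps.
  move=> _ /= hl.
  have hx : ~~ local_max (xpart t) \/ Sg (xpart t) = Nk k.
    have [hlx|hlx] := boolP (local_max (xpart t)); last by left.
    right; have := HI.2 ps hps; rewrite hlps => /(_ hlx) ->.
    by rewrite /ones Sg_ones.
  by move: (nlmA hc hx); rewrite hl.
rewrite incpath_cons => /and3P[ha hF hp] /= hl.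
case: (stepA hc ha hF) => [[j [eu hj]]|[eu hS]].
  have hcu : cfg u false false false false by rewrite eu; apply: cfg_widen.
  have hxu : xpart u = flip (xpart t) j by rewrite eu xpart_widen.
  have hps' : increasing_path (origin k) (rcons ps (xpart u)).
    rewrite /increasing_path rcons_path; apply/andP; split; first exact: hps.
    by rewrite /= hlps hxu adj_flip hj.
  have hlps' : last (origin k) (rcons ps (xpart u)) = xpart u by rewrite last_rcons.
  have [ws [h1 h2 h3 h4]] := IH u _ hcu hps' hlps' hp hl.
  exists (xpart u :: ws); split => //.
  - by rewrite incpath_cons h1 hxu adj_flip hj.
have hcu : cfg u true false false false by rewrite eu; apply: cfg_yidx0.
have hSu : Sg (xpart u) = Nk k by rewrite eu xpart_yidx.
have [h1 h2] := pathA' hcu hSu hp hl.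
exists [::]; split => //=.
- by apply: Sg_N.
- by rewrite add0n; apply: leqW.
Qed.

Lemma lower_bound vs : increasing_path (origin k.+1) vs -> local_max (last (origin k.+1) vs) ->
  (2 * a <= size vs)%N /\ last (origin k.+1) vs = ones k.+1.
Proof.
move=> hp hl.
have hc : cfg (origin k.+1) false false false false by split; rewrite yb_origin.
have [ws [h1 h2 h3 h4]] := pathA hc (ps := [::]) isT (esym (xpart_origin k)) hp hl.
split => //.
rewrite xpart_origin in h1 h2.
have : (a <= size ws)%N by case: Ha => _; apply => //; rewrite h2; apply: HI.1.
move: h3; lia.
Qed.
End Paths.

Lemma climb_aux k n (v : (dim k).-tuple bool) :
  (#|[set w : (dim k).-tuple bool | (F v < F w)%R]| <= n)%N ->
  exists vs, increasing_path v vs /\ local_max (last v vs).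
Proof.
elim: n v => [|n IH] v hn.
  exists [::]; split => //=; apply/forallP => w; apply/implyP => _.
  apply/negP => hw; move: hn; rewrite leqn0 cards_eq0 => /eqP e.
  have hw' : w \in [set z : (dim k).-tuple bool | F v < F z] by rewrite inE.
  by rewrite e inE in hw'.
case: (boolP (local_max v)) => hl; first by exists [::].
have [j hj] := not_lmP hl.
have hsub : flip v j |: [set z | F (flip v j) < F z] \subset [set w | F v < F w].
  apply/subsetP => z; rewrite !inE => /orP [/eqP -> //| h].
  by apply: lt_trans h.
have hcard := subset_leq_card hsub.
rewrite cardsU1 inE ltxx /= in hcard.
have [ws [h1 h2]] : exists ws, increasing_path (flip v j) ws /\ local_max (last (flip v j) ws).
  apply: IH; rewrite -ltnS; apply: leq_trans hn; by rewrite add1n in hcard.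
by exists (flip v j :: ws); rewrite incpath_cons adj_flip hj h1.
Qed.

Lemma climb k (v : (dim k).-tuple bool) :
  exists vs, increasing_path v vs /\ local_max (last v vs).
Proof. exact: (@climb_aux k _ v (leqnn _)). Qed.

Lemma min_exists (P : nat -> Prop) n : P n -> exists m, P m /\ forall m', P m' -> (m <= m')%N.
Proof.
elim: n {-2}n (leqnn n) => [|n IH] m hm hP.
  by exists m => //; split => // m' _; move: hm; rewrite leqn0 => /eqP ->.
case: (Classical_Prop.classic (exists m', P m' /\ (m' < m)%N)) => [[m' [h1 h2]]|hno].
  by apply: (IH m') => //; lia.
exists m; split => // m' hm'; rewrite leqNgt; apply/negP => hlt.
by apply: hno; exists m'.
Qed.

Lemma exists_p k : exists a, is_p k a.
Proof.
have [vs [h1 h2]] := climb (origin k).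
have [m [[ws [w1 w2 w3]] hmin]] :=
  @min_exists (fun L => exists vs, [/\ increasing_path (origin k) vs,
                  local_max (last (origin k) vs) & size vs = L]) _ (ex_intro _ vs (And3 h1 h2 erefl)).
exists m; split; first by exists ws.
by move=> vs' p' l'; apply: hmin; exists vs'.
Qed.

Lemma Inv_succ k : Inv k -> Inv k.+1.
Proof.
move=> HI; have [a Ha] := exists_p k.
have hc : cfg (ones k.+1) true true true true.
  by split; rewrite /yb /ones nth_nseq dimS ltn_add2l.
have hx : xpart (ones k.+1) = ones k.
  apply: eq_from_tnth => i; rewrite !(tnth_nth false) nth_xpart //.
  by rewrite /ones !nth_nseq ltn_ord (leq_trans (ltn_ord i) (dim_le k)).
split; first by rewrite (lmC hc) hx; exact: HI.1.
by move=> vs hp hl; have [] := lower_bound Ha HI hp hl.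
Qed.

Lemma F0 (t : (dim 0).-tuple bool) : F t = Sg t.
Proof.
rewrite /Sg !big_ord_recl big_ord0 /F /= /vec !(tnth_nth false) /=.
by rewrite addr0.
Qed.

Lemma lm0 (t : (dim 0).-tuple bool) : local_max t -> t = ones 0.
Proof.
move=> hl; apply: eq_from_tnth => i; rewrite /ones tnth_nseq.
case: (boolP (tnth t i)) => // hi; exfalso.
have hF : F t < F (flip t i) by rewrite !F0 Sg_flip (negbTE hi) ltrDl.
by move: (not_lm (adj_flip t i) hF); rewrite hl.
Qed.

Lemma Inv0 : Inv 0.
Proof.
split; last by move=> vs _; apply: lm0.
apply/forallP => w; apply/implyP => _; rewrite -leNgt !F0 /ones Sg_ones.
by have /andP[] := Sg_bounds w.
Qed.

Lemma path0 (v : (dim 0).-tuple bool) vs : increasing_path v vs ->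
  Sg (last v vs) = Sg v + (size vs)%:Z.
Proof.
elim: vs v => [|u vs IH] v; first by rewrite addr0.
rewrite incpath_cons => /and3P[/adjP[j ->] hF hp] /=.
rewrite (IH _ hp); move: hF; rewrite !F0 Sg_flip.
case: (tnth v j) => hF; first by move: hF; rewrite ltrDl.
rewrite -[(size vs).+1]addn1 PoszD; ring.
Qed.

Lemma is_p0 : is_p 0 2.
Proof.
have hsize : forall vs, increasing_path (origin 0) vs -> local_max (last (origin 0) vs) ->
    size vs = 2%N.
  move=> vs hp hl; have := path0 hp; rewrite (lm0 hl) /ones /origin Sg_ones.
  have -> : Sg (nseq_tuple (dim 0) false) = 0.
    by apply/big1 => i _; rewrite tnth_nseq.
  rewrite add0r => /eqP; rewrite eqz_nat => /eqP <-. by [].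
split.
  have [vs [h1 h2]] := climb (origin 0).
  by exists vs; split => //; apply: hsize.
by move=> vs hp hl; rewrite hsize.
Qed.

Lemma InvAll k : Inv k.
Proof. elim: k => [|k IH]; [exact: Inv0 | exact: Inv_succ]. Qed.

Theorem mainTheorem4 :
  is_p 0 2 /\
  (forall k : nat, exists a b : nat, [/\ is_p k a, is_p k.+1 b & (2 * a <= b)%N]).
Proof.
split; first exact: is_p0.
move=> k; have [a Ha] := exists_p k; have [b Hb] := exists_p k.+1.
exists a, b; split => //.
case: (Hb) => [[vs [h1 h2 h3]] _].
rewrite -h3; have [] := lower_bound Ha (InvAll k) h1 h2; done.
Qed.
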